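(* For every $A\in\Theta^\pm_\triangle(n)$, the set $\{B\in\Theta^\pm_\triangle(n):B\prec A\}$ is finite. Hence, for every $A'\in\widetilde\Theta_\triangle(n)$, the interval $(-\infty,A']=\{B\in\widetilde\Theta_\triangle(n):B\sqsubseteq A'\}$ is finite.
   Context: $n\ge2$. $\widetilde\Theta_\triangle(n)$ is the set of matrices $A=(a_{i,j})_{i,j\in\mathbb Z}$ with integer entries, $a_{i,j}\ge0$ for $i\ne j$, $a_{i+n,j+n}=a_{i,j}$ for all $i,j$, and such that each row and each column has finitely many nonzero entries; $\Theta^\pm_\triangle(n)$ is the set of such matrices with nonnegative entries and zero diagonal. $\mathrm{ro}(A)=(\sum_ja_{i,j})_{i\in\mathbb Z}$, $\mathrm{co}(A)=(\sum_ia_{i,j})_{j\in\mathbb Z}$. For $i\ne j$ let $\sigma_{i,j}(A)=\sum_{s\le i,t\ge j}a_{s,t}$ if $i<j$ and $\sigma_{i,j}(A)=\sum_{s\ge i,t\le j}a_{s,t}$ if $i>j$. $B\preccurlyeq A$ iff $\sigma_{i,j}(B)\le\sigma_{i,j}(A)$ for all $i\ne j$; $B\prec A$ iff $B\preccurlyeq A$ and $\sigma_{i,j}(B)<\sigma_{i,j}(A)$ for some $i\ne j$; $B\sqsubseteq A$ iff $B\preccurlyeq A$, $\mathrm{ro}(B)=\mathrm{ro}(A)$ and $\mathrm{co}(B)=\mathrm{co}(A)$. *)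

(* Defs.v *)
From mathcomp Require Import all_boot all_order all_algebra.
From Stdlib Require Import ClassicalEpsilon.
From Stdlib Require List.
Set Implicit Arguments. Unset Strict Implicit. Unset Printing Implicit Defensive.
Import Order.TTheory GRing.Theory Num.Theory.
Local Open Scope ring_scope.

Definition zmat := int -> int -> int.

(* The eventual value of an integer sequence (the value of an infinite sum
   computed along exhausting finite windows); 0 if it does not stabilize. *)
Definition ev_val (f : nat -> int) : int :=
  match excluded_middle_informative
          (exists v : int, exists N0 : nat, forall N : nat, (N0 <= N)%N -> f N = v) with
  | left h => proj1_sig (constructive_indefinite_description _ h)
  | right _ => 0
  end.

Definition ThetaTilde (n : nat) (A : zmat) : Prop :=
  (forall i j : int, i != j -> 0 <= A i j) /\
  (forall i j : int, A (i + n%:Z) (j + n%:Z) = A i j) /\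
  (forall i : int, exists s : seq int, forall j : int, A i j != 0 -> j \in s) /\
  (forall j : int, exists s : seq int, forall i : int, A i j != 0 -> i \in s).

Definition ThetaPM (n : nat) (A : zmat) : Prop :=
  ThetaTilde n A /\ (forall i j : int, 0 <= A i j) /\ (forall i : int, A i i = 0).

Definition ro (A : zmat) (i : int) : int :=
  ev_val (fun N => \sum_(k < (2 * N)%N) A i (k%:Z - N%:Z)).
Definition co (A : zmat) (j : int) : int :=
  ev_val (fun N => \sum_(k < (2 * N)%N) A (k%:Z - N%:Z) j).

Definition sigma (A : zmat) (i j : int) : int :=
  if i < j then
    ev_val (fun N => \sum_(k < N) \sum_(l < N) A (i - k%:Z) (j + l%:Z))
  else
    ev_val (fun N => \sum_(k < N) \sum_(l < N) A (i + k%:Z) (j - l%:Z)).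

Definition preceq (B A : zmat) : Prop :=
  forall i j : int, i != j -> sigma B i j <= sigma A i j.

Definition prec (B A : zmat) : Prop :=
  preceq B A /\ exists i j : int, i != j /\ sigma B i j < sigma A i j.

Definition sqsubseteq (B A : zmat) : Prop :=
  preceq B A /\ (forall i, ro B i = ro A i) /\ (forall j, co B j = co A j).

Definition finite_set (P : zmat -> Prop) : Prop :=
  exists l : list zmat, forall B, P B -> List.In B l.

(* Main.v *)
Require Import Defs.
From mathcomp Require Import all_boot all_order all_algebra.
From Stdlib Require Import ClassicalEpsilon FunctionalExtensionality.
From Stdlib Require List.
From mathcomp Require Import zify.
Import Order.TTheory GRing.Theory Num.Theory.
Local Open Scope ring_scope.

Lemma inIn (T : eqType) (x : T) (s : seq T) : x \in s -> List.In x s.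
Proof. elim: s => //= y s IH; rewrite in_cons => /orP[/eqP->|/IH]; by [left|right]. Qed.

Lemma ev_val_eq (f : nat -> int) (v : int) :
  (exists N0, forall N, (N0 <= N)%N -> f N = v) -> ev_val f = v.
Proof.
move=> [N0 H0]; rewrite /ev_val.
case: excluded_middle_informative => [h|h]; last by exfalso; apply: h; exists v, N0.
case: (constructive_indefinite_description _ h) => v' [N1 H1] /=.
by rewrite -(H1 (maxn N0 N1)) ?leq_maxr // H0 // leq_maxl.
Qed.

Lemma sum_stab (g : nat -> int) M N : (M <= N)%N ->
  (forall k, (M <= k)%N -> g k = 0) -> \sum_(k < N) g k = \sum_(k < M) g k.
Proof.
move=> MN hg; rewrite -!(big_mkord xpredT) (big_cat_nat (leq0n M) MN) /=.
rewrite [X in _ + X = _]big_nat_cond [X in _ + X = _]big1 ?addr0 // => k /andP[/andP[hk _] _]; exact: hg.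
Qed.

Lemma dsum_stab (F : nat -> nat -> int) M N : (M <= N)%N ->
  (forall k l, (M <= k)%N || (M <= l)%N -> F k l = 0) ->
  \sum_(k < N) \sum_(l < N) F k l = \sum_(k < M) \sum_(l < M) F k l.
Proof.
move=> MN hF; rewrite (@sum_stab (fun k => \sum_(l < N) F k l) M N MN).
  apply: eq_bigr => k _; apply: sum_stab => // l hl; apply: hF; by rewrite hl orbT.
by move=> k hk; rewrite big1 // => l _; apply: hF; rewrite hk.
Qed.

Lemma dsum_ge (F : nat -> nat -> int) M : (forall k l, 0 <= F k l) ->
  F 0%N 0%N <= \sum_(k < M.+1) \sum_(l < M.+1) F k l.
Proof.
move=> hF; rewrite big_ord_recl big_ord_recl /= -addrA lerDl.
by rewrite addr_ge0 // sumr_ge0 // => k _; rewrite sumr_ge0.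
Qed.

Lemma mem_leq_sum (T : eqType) (s : seq T) (f : T -> nat) x :
  x \in s -> (f x <= \sum_(y <- s) f y)%N.
Proof.
elim: s => //= y s IH; rewrite in_cons big_cons => /orP[/eqP->|/IH h].
  exact: leq_addr.
exact: (leq_trans h (leq_addl _ _)).
Qed.


Definition rng (M : nat) : seq int := [seq (k%:Z - M%:Z) | k <- iota 0 (2 * M).+1].
Fixpoint allseq (M m : nat) : seq (seq int) :=
  if m is m'.+1 then [seq x :: s | x <- rng M, s <- allseq M m'] else [:: [::]].

Lemma allseq_cover (M : nat) (s : seq int) :
  (forall x, x \in s -> (- M%:Z <= x) && (x <= M%:Z)) -> s \in allseq M (size s).
Proof.
elim: s => [|x s IH] h; first by rewrite inE.
change (x :: s \in [seq y :: t | y <- rng M, t <- allseq M (size s)]).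
apply: (allpairs_f (fun y t => y :: t)).
  have hx := h x (mem_head _ _).
  have -> : x = (absz (x + M%:Z)%R)%:Z - M%:Z by lia.
  rewrite /rng; apply: (map_f (fun k : nat => k%:Z - M%:Z)); rewrite mem_iota; lia.
by apply: IH => y hy; apply: h; rewrite in_cons hy orbT.
Qed.

Lemma finite_of_code (P : zmat -> Prop) (code : zmat -> seq int) (L : seq (seq int)) :
  (forall B, P B -> code B \in L) ->
  (forall B1 B2, P B1 -> P B2 -> code B1 = code B2 -> B1 = B2) -> finite_set P.
Proof.
move=> hc hi.
pose dec t := epsilon (inhabits ((fun _ _ => 0) : zmat)) (fun B => P B /\ code B = t).
exists (List.map dec L) => B hB.
have hd : P (dec (code B)) /\ code (dec (code B)) = code B.
  by rewrite /dec; exact: (epsilon_spec _ (fun B0 : zmat => P B0 /\ code B0 = code B) (ex_intro _ B (conj hB erefl))).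
rewrite -(hi _ _ hd.1 hB hd.2); apply: List.in_map; exact: inIn (hc _ hB).
Qed.

Section S.
Variable n : nat.
Hypothesis hn : (0 < n)%N.

Lemma per_nat A : ThetaTilde n A -> forall i j (q : nat),
  A (i + (q * n)%:Z) (j + (q * n)%:Z) = A i j.
Proof.
move=> [_ [hp _]] i j; elim=> [|q IH]; first by rewrite mul0n !addr0.
have e : forall x, x + (q.+1 * n)%N%:Z = (x + (q * n)%N%:Z) + n%:Z by move=> x; lia.
by rewrite !e hp.
Qed.

Lemma per_int A : ThetaTilde n A -> forall i j (q : int),
  A (i + q * n%:Z) (j + q * n%:Z) = A i j.
Proof.
move=> hA i j [k|k].
  by have := per_nat _ hA i j k; rewrite PoszM.
have e : forall x, x = (x + Negz k * n%:Z) + (k.+1 * n)%N%:Z by move=> x; lia.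
by rewrite [in RHS](e i) [in RHS](e j) (per_nat _ hA).
Qed.

Lemma decomp (i : int) : exists r q : int, i = r + q * n%:Z /\ 0 <= r /\ r < n%:Z.
Proof.
exists (i %% n%:Z)%Z, (i %/ n%:Z)%Z; split; first by rewrite addrC -divz_eq.
split; [apply: modz_ge0 | apply: ltz_pmod]; lia.
Qed.

Lemma band A : ThetaTilde n A -> exists D : nat,
  forall i j, A i j != 0 -> j - i <= D%:Z /\ i - j <= D%:Z.
Proof.
move=> hA.
have rb : forall m, exists D : nat, forall r : int, 0 <= r -> r < m%:Z ->
    forall j, A r j != 0 -> j - r <= D%:Z /\ r - j <= D%:Z.
  elim=> [|m [D HD]]; first by exists 0%N => r ? ?; lia.
  have [s hs] := (proj1 (proj2 (proj2 hA))) m%:Z.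
  exists (D + \sum_(x <- s) absz (x - m%:Z))%N => r r0 rm j hj.
  have [rlt|req] : r < m%:Z \/ r = m%:Z by lia.
    have := HD r r0 rlt j hj; lia.
  subst r; have := @mem_leq_sum _ s (fun x => absz (x - m%:Z)) j (hs j hj) => /= ?; lia.
have [D HD] := rb n; exists D => i j hij.
have [r [q [ei [r0 rn]]]] := decomp i.
have e : A i j = A r (j - q * n%:Z).
  by rewrite -(per_int _ hA r (j - q * n%:Z) q) subrK ei.
rewrite e in hij; have := HD r r0 rn _ hij; lia.
Qed.


Lemma sigma_ge B : ThetaTilde n B -> forall i j, i != j -> B i j <= sigma B i j.
Proof.
move=> hB i j hij; have [D HD] := band B hB.
have nn := proj1 hB.
rewrite /sigma; case: ifP => hlt.
  rewrite (@ev_val_eq _ (\sum_(k < D.+1) \sum_(l < D.+1) B (i - k%:Z) (j + l%:Z))).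
    have := @dsum_ge (fun k l : nat => B (i - k%:Z) (j + l%:Z)) D.
    rewrite subr0 addr0; apply=> k l; apply: nn; lia.
  exists D.+1 => N hN; apply: (@dsum_stab (fun k l : nat => B (i - k%:Z) (j + l%:Z))) => // k l kl.
  apply/eqP; apply: contraT => hne; have := HD _ _ hne; move: kl hlt => /orP[] ? ?; lia.
rewrite (@ev_val_eq _ (\sum_(k < D.+1) \sum_(l < D.+1) B (i + k%:Z) (j - l%:Z))).
  have := @dsum_ge (fun k l : nat => B (i + k%:Z) (j - l%:Z)) D.
  rewrite subr0 addr0; apply=> k l; apply: nn; move: hlt hij; lia.
exists D.+1 => N hN; apply: (@dsum_stab (fun k l : nat => B (i + k%:Z) (j - l%:Z))) => // k l kl.
apply/eqP; apply: contraT => hne; have := HD _ _ hne; move: kl hlt hij => /orP[] ? ? ?; lia.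
Qed.

Lemma sigma_zero A (D : nat) : (forall i j, A i j != 0 -> j - i <= D%:Z /\ i - j <= D%:Z) ->
  forall i j, ~ (j - i <= D%:Z /\ i - j <= D%:Z) -> sigma A i j = 0.
Proof.
move=> HD i j hout; rewrite /sigma; case: ifP => hlt; apply: ev_val_eq; exists 0%N => N _;
  rewrite big1 // => k _; rewrite big1 // => l _; apply/eqP; apply: contraT => hne;
  have := HD _ _ hne; move: hlt hout; lia.
Qed.


Lemma win_step (g : int -> int) (N : nat) : g (- (N.+1)%:Z) = 0 -> g N%:Z = 0 ->
  \sum_(k < 2 * N.+1) g (k%:Z - (N.+1)%:Z) = \sum_(k < 2 * N) g (k%:Z - N%:Z).
Proof.
move=> h1 h2.
rewrite -(big_mkord xpredT (fun k => g (k%:Z - (N.+1)%:Z))).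
rewrite -(big_mkord xpredT (fun k => g (k%:Z - N%:Z))).
have -> : (2 * N.+1 = (2 * N).+2)%N by lia.
rewrite big_nat_recl // big_nat_recr //=.
have e1 : (0%N)%:Z - (N.+1)%:Z = - (N.+1)%:Z by lia.
have e2 : ((2 * N).+1)%:Z - (N.+1)%:Z = N%:Z by lia.
rewrite e1 e2 h1 h2 add0r addr0; apply: eq_bigr => k _; congr g; lia.
Qed.

Lemma win_stab (g : int -> int) (a : nat) :
  (forall j, g j != 0 -> - a%:Z < j /\ j < a%:Z) -> forall N, (a <= N)%N ->
  \sum_(k < 2 * N) g (k%:Z - N%:Z) = \sum_(k < 2 * a) g (k%:Z - a%:Z).
Proof.
move=> hg; elim=> [|N IH] hN.
  by have -> : a = 0%N by lia.
have [aN|aN] := leqP a N; last by have -> : a = N.+1 by lia.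
rewrite win_step ?IH //; apply/eqP; apply: contraT => /hg; lia.
Qed.

Lemma ro_val B (i : int) : ThetaTilde n B -> exists a : nat,
  forall a', (a <= a')%N -> ro B i = \sum_(k < 2 * a') B i (k%:Z - a'%:Z).
Proof.
move=> hB; have [D HD] := band B hB; exists (absz i + D).+1 => a' ha'.
have hw : forall j, B i j != 0 -> - a'%:Z < j /\ j < a'%:Z.
  by move=> j /HD; lia.
rewrite /ro; apply: ev_val_eq; exists a' => N hN; exact: win_stab.
Qed.

Lemma ro_inj B1 B2 (i : int) : ThetaTilde n B1 -> ThetaTilde n B2 ->
  (forall j, j != i -> B1 i j = B2 i j) -> ro B1 i = ro B2 i -> B1 i i = B2 i i.
Proof.
move=> h1 h2 heq hro.
have [a1 H1] := ro_val B1 i h1; have [a2 H2] := ro_val B2 i h2.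
set a := (a1 + a2 + absz i).+1.
rewrite (H1 a) ?(H2 a) in hro; try lia.
move/eqP: hro; rewrite -subr_eq0 -sumrB => /eqP hs.
apply/eqP; rewrite -subr_eq0; apply/eqP; rewrite -hs.
have hK : (absz (i + a%:Z)%R < 2 * a)%N by lia.
rewrite (bigD1 (Ordinal hK)) //= big1 ?addr0.
  by have -> : (absz (i + a%:Z))%:Z - a%:Z = i by lia.
move=> k hk; rewrite heq ?subrr //; apply: contraNneq hk => e.
by apply/eqP/val_inj => /=; move/eqP: e; lia.
Qed.


Lemma main_fin A (P : zmat -> Prop) : ThetaTilde n A ->
  (forall B, P B -> ThetaTilde n B /\ preceq B A) ->
  (forall B1 B2, P B1 -> P B2 -> (forall i j, i != j -> B1 i j = B2 i j) -> B1 = B2) ->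
  finite_set P.
Proof.
move=> hA hP hinj; have [D HD] := band A hA.
pose pos := [seq (r%:Z, r%:Z + d%:Z - D%:Z) | r <- iota 0 n, d <- iota 0 (2 * D).+1].
pose cf (B : zmat) := fun p : int * int => if p.1 == p.2 then 0 else B p.1 p.2.
pose code B := [seq cf B p | p <- pos].
pose M := (\sum_(p <- pos) absz (sigma A p.1 p.2))%N.
apply: (@finite_of_code P code (allseq M (size pos))).
  move=> B hPB; have [hB hpre] := hP B hPB.
  rewrite -(size_map (cf B) pos); apply: allseq_cover => x /mapP [p hp ->].
  have h3 := @mem_leq_sum _ pos (fun p => absz (sigma A p.1 p.2)) p hp.
  rewrite -/M in h3; clearbody M; move: hp h3; case: p => a b /= _ h3.
  rewrite /cf /=; case: eqP => [_|hne]; first lia.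
  have h0 := proj1 hB a b (introN eqP hne).
  have h1 := sigma_ge B hB a b (introN eqP hne).
  have h2 := hpre a b (introN eqP hne).
  lia.
move=> B1 B2 hP1 hP2 hc; apply: hinj => // i j hij.
have [hB1 pre1] := hP B1 hP1; have [hB2 pre2] := hP B2 hP2.
have [inb|outb] : (j - i <= D%:Z /\ i - j <= D%:Z) \/ ~ (j - i <= D%:Z /\ i - j <= D%:Z) by lia.
  have [r [q [ei [r0 rn]]]] := decomp i.
  have e : forall B, ThetaTilde n B -> B i j = B r (j - q * n%:Z).
    by move=> B hB; rewrite -(per_int B hB r (j - q * n%:Z) q) subrK ei.
  rewrite (e B1 hB1) (e B2 hB2).
  have hmem : (r, j - q * n%:Z) \in pos.
    have -> : (r, j - q * n%:Z) = ((absz r)%:Z, (absz r)%:Z + (absz (j - q * n%:Z - r + D%:Z)%R)%:Z - D%:Z).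
      by congr pair; lia.
    apply: (allpairs_f (fun r d : nat => (r%:Z, r%:Z + d%:Z - D%:Z))); rewrite mem_iota; lia.
  have := (proj2 (eq_in_map (cf B1) (cf B2) pos) hc) _ hmem.
  rewrite /cf /=; case: eqP => // hre; move/eqP: hij; lia.
have z := sigma_zero A D HD i j outb.
have a1 := proj1 hB1 i j hij; have a2 := proj1 hB2 i j hij.
have b1 := sigma_ge B1 hB1 i j hij; have b2 := sigma_ge B2 hB2 i j hij.
have c1 := pre1 i j hij; have c2 := pre2 i j hij; lia.
Qed.

End S.

Theorem lemma7p5 (n : nat) (hn : (2 <= n)%N) :
  (forall A : zmat, ThetaPM n A ->
     finite_set (fun B => ThetaPM n B /\ prec B A)) /\
  (forall A' : zmat, ThetaTilde n A' ->
     finite_set (fun B => ThetaTilde n B /\ sqsubseteq B A')).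
Proof.
have hn0 : (0 < n)%N by lia.
split.
  move=> A hA; apply: (@main_fin n hn0 A _ hA.1).
    by move=> B [[hB _] [hpre _]].
  move=> B1 B2 [[h1 [_ d1]] _] [[h2 [_ d2]] _] he.
  apply: functional_extensionality => i; apply: functional_extensionality => j.
  by case: (eqVneq i j) => [->|/he //]; rewrite d1 d2.
move=> A hA; apply: (@main_fin n hn0 A _ hA).
  by move=> B [hB [hpre _]].
move=> B1 B2 [h1 [_ [r1 _]]] [h2 [_ [r2 _]]] he.
apply: functional_extensionality => i; apply: functional_extensionality => j.
case: (eqVneq i j) => [<-|/he //].
apply: (@ro_inj n hn0 B1 B2 i h1 h2); last by rewrite r1 r2.
by move=> j' hj'; apply: he; rewrite eq_sym.
Qed.
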